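(* Let $\alpha$ be a snowy weak composition. Then (1) $\mathsf{dark}(\alpha)=\{(r,\alpha_r):\alpha_r>0\}$; (2) $\mathsf{rajcode}(\alpha)_r=\alpha_r+|\{r'>r:\alpha_r<\alpha_{r'}\}|$ for every $r$; (3) $\mathsf{raj}(\alpha)=|\alpha|+|\{(r,r'):r<r',\ \alpha_r<\alpha_{r'}\}|$.
   Context: A weak composition is an infinite sequence of nonnegative integers with finitely many positive entries; it is snowy if its positive entries are distinct; $|\alpha|=\sum\alpha_i$. $D(\alpha)=\{(r,c):1\le c\le\alpha_r\}$ (row 1 on top). For a diagram $D$, $\mathsf{snow}(D)$ is built by iterating through rows from bottom to top: in row $r$ take the rightmost cell $(r,c)\in D$ such that column $c$ contains no dark cloud yet; if it exists label it a dark cloud and add snowflake cells at $(r',c)$ for all $r'<r$ with $(r',c)\notin D$. $\mathsf{dark}(\alpha)$ is the set of dark clouds of $\mathsf{snow}(D(\alpha))$, $\mathsf{rajcode}(\alpha)_i$ is the number of cells of $\mathsf{snow}(D(\alpha))$ in row $i$, and $\mathsf{raj}(\alpha)=|\mathsf{rajcode}(\alpha)|$. *)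

(* Defs.v *)
From mathcomp Require Import all_boot.
Set Implicit Arguments. Unset Strict Implicit. Unset Printing Implicit Defensive.

(* A weak composition is represented by a finite list [alpha]; its entries
   are alpha_1, alpha_2, ..., alpha_(size alpha), and all later entries are 0.
   Rows are 1-indexed (row 1 on top); [comp_at alpha 0 = 0] by convention. *)
Definition comp_at (alpha : seq nat) (r : nat) : nat :=
  if r is r'.+1 then nth 0 alpha r' else 0.

Definition comp_size (alpha : seq nat) : nat := sumn alpha.

Definition snowy (alpha : seq nat) : bool := uniq [seq x <- alpha | 0 < x].

(* cells (row, column) *)
Definition cell := (nat * nat)%type.

Definition diag (alpha : seq nat) : seq cell :=
  [seq (r, c) | r <- iota 1 (size alpha), c <- iota 1 (comp_at alpha r)].

Definition max_row (D : seq cell) : nat := foldr maxn 0 [seq p.1 | p <- D].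

(* One step of the snow construction in row r, given the dark clouds [dk]
   found so far (in rows below r): take the rightmost cell (r,c) in D whose
   column c contains no dark cloud yet, and make it a dark cloud. *)
Definition snow_step (D : seq cell) (r : nat) (dk : seq cell) : seq cell :=
  let cand := [seq p.2 | p <- D & (p.1 == r) && (p.2 \notin [seq q.2 | q <- dk])] in
  if cand is [::] then dk else (r, foldr maxn 0 cand) :: dk.

(* Dark clouds of snow(D): iterate rows from the bottom (max_row D) to the
   top (row 1); foldr processes the last element of the list first. *)
Definition dark_of (D : seq cell) : seq cell :=
  foldr (snow_step D) [::] (iota 1 (max_row D)).

Definition snowflakes (D : seq cell) : seq cell :=
  [seq p <- [seq (r', q.2) | q <- dark_of D, r' <- iota 1 q.1.-1] | p \notin D].

Definition snow_cells (D : seq cell) : seq cell := undup (D ++ snowflakes D).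

Definition dark (alpha : seq nat) : seq cell := dark_of (diag alpha).

Definition rajcode (alpha : seq nat) (i : nat) : nat :=
  count (fun p : cell => p.1 == i) (snow_cells (diag alpha)).

(* raj(alpha) = |rajcode(alpha)|; all cells of snow(D(alpha)) lie in rows
   1..size alpha, so the sum over these rows is the full sum. *)
Definition raj (alpha : seq nat) : nat :=
  \sum_(1 <= i < (size alpha).+1) rajcode alpha i.

(* Main.v *)
Require Import Defs.
From mathcomp Require Import all_boot zify.

Lemma comp_at0 alpha r : comp_at alpha r > 0 -> 0 < r <= size alpha.
Proof.
case: r => [//|r] /=; case: (ltnP r (size alpha)) => // H.
by rewrite nth_default.
Qed.

Lemma mem_diag alpha r c :
  ((r, c) \in diag alpha) = [&& 0 < r, 0 < c & c <= comp_at alpha r].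
Proof.
apply/allpairsPdep/idP.
- case=> [x [y [Hx Hy [-> ->]]]].
  move: Hx Hy; rewrite !mem_iota add1n ltnS => /andP[-> _] /andP[-> H] /=.
  by rewrite -ltnS.
- case/and3P=> Hr Hc Hle; exists r, c; split => //.
  + have := @comp_at0 _ _ (leq_trans Hc Hle).
    by rewrite mem_iota add1n ltnS.
  + by rewrite mem_iota Hc add1n ltnS.
Qed.

Lemma snowy_inj alpha r r' : snowy alpha ->
  0 < comp_at alpha r -> comp_at alpha r = comp_at alpha r' -> r = r'.
Proof.
move=> Hs Hp E.
have Hp' : 0 < comp_at alpha r' by rewrite -E.
case: r Hp E => [//|i]; case: r' Hp' => [//|j] /= Hj Hi E.
congr S.
elim: alpha Hs i j Hi Hj E => [|x s IH] /=; first by move=> i j; rewrite nth_nil.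
rewrite /snowy /=; case: ifP => Hx Hs.
- move: Hs => /= /andP[Hn Hs].
  case=> [|i] [|j] //= Hi Hj E.
  + exfalso; move/negP: Hn; apply; rewrite E mem_filter Hj mem_nth //.
    by case: (ltnP j (size s)) => // H; move: Hj; rewrite nth_default.
  + exfalso; move/negP: Hn; apply; rewrite -E mem_filter Hi mem_nth //.
    by case: (ltnP i (size s)) => // H; move: Hi; rewrite nth_default.
  + by congr S; apply: IH.
- case=> [|i] [|j] //= Hi Hj E.
  + by rewrite Hi in Hx.
  + by rewrite Hj in Hx.
  + by congr S; apply: IH.
Qed.

Lemma le_foldmax (s : seq nat) x : x \in s -> x <= foldr maxn 0 s.
Proof.
elim: s => [|y s IH] //=; rewrite in_cons => /orP[/eqP->|H].
- by rewrite leq_maxl.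
- by rewrite leq_max IH ?orbT.
Qed.

Lemma foldmax_le (s : seq nat) k : (forall x, x \in s -> x <= k) -> foldr maxn 0 s <= k.
Proof.
elim: s => [|y s IH] //= H.
rewrite geq_max H ?mem_head //= IH // => x Hx; apply: H; by rewrite in_cons Hx orbT.
Qed.

Lemma dark_fold alpha : snowy alpha -> forall n a,
  foldr (snow_step (diag alpha)) [::] (iota a n) =
  [seq (r, comp_at alpha r) | r <- [seq r <- iota a n | 0 < comp_at alpha r]].
Proof.
move=> Hs; elim=> [|n IH] a //=.
rewrite IH /snow_step.
set dk := [seq (r, comp_at alpha r) | r <- _].
set cand := [seq p.2 | p <- _ & _].
have Hc : forall x, (x \in cand) = ((a, x) \in diag alpha) && (x \notin [seq q.2 | q <- dk]).
  move=> x; apply/mapP/idP.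
  - case=> [[p1 p2]]; rewrite mem_filter /= => /andP[/andP[/eqP -> Hn] HD] ->.
    by rewrite HD Hn.
  - move=> /andP[HD Hn]; exists (a, x) => //; by rewrite mem_filter /= eqxx Hn HD.
have Hdk : forall x, (x \in [seq q.2 | q <- dk]) ->
    exists r, [/\ a < r, 0 < comp_at alpha r & x = comp_at alpha r].
  move=> x; rewrite /dk -map_comp => /mapP[r]; rewrite mem_filter mem_iota => /andP[Hp /andP[Hr _]] ->.
  by exists r.
case: (posnP (comp_at alpha a)) => Ha.
- have -> : cand = [::].
    case Ec: cand => [|y s] //.
    have : y \in cand by rewrite Ec mem_head.
    by rewrite Hc mem_diag Ha => /andP[/and3P[_ H1 H2] _]; move: H2; rewrite leqNgt H1.
  by [] .
- have Hk : comp_at alpha a \in cand.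
    rewrite Hc mem_diag Ha leqnn (proj1 (andP (@comp_at0 _ _ Ha))) /=.
    apply/negP => /Hdk [r [Har Hr E]].
    by move: (@snowy_inj _ _ _ Hs Ha E) Har => ->; rewrite ltnn.
  case Ec: cand => [|y s]; first by rewrite Ec in Hk.
  rewrite -Ec /=; congr cons; congr pair.
  apply/eqP; rewrite eqn_leq le_foldmax // andbT.
  apply: foldmax_le => x; rewrite Hc mem_diag => /andP[/and3P[]] //.
Qed.

Lemma le_max_row (D : seq cell) p : p \in D -> p.1 <= max_row D.
Proof. by move=> H; apply: le_foldmax; apply: map_f. Qed.

Lemma mem_dark alpha : snowy alpha -> forall r c,
  ((r, c) \in dark alpha) = (0 < comp_at alpha r) && (c == comp_at alpha r).
Proof.
move=> Hs r c; rewrite /dark /dark_of dark_fold //.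
apply/mapP/idP.
- by case=> r'; rewrite mem_filter => /andP[H _] [-> ->]; rewrite H eqxx.
- case/andP=> H /eqP ->; exists r => //.
  rewrite mem_filter H mem_iota add1n ltnS /=.
  have [-> _] := andP (@comp_at0 _ _ H).
  have : (r, 1) \in diag alpha by rewrite mem_diag H (proj1 (andP (@comp_at0 _ _ H))).
  by move/le_max_row.
Qed.

Definition T2 alpha r :=
  [seq (r, c) | c <- iota 1 (comp_at alpha r)] ++
  [seq (r, comp_at alpha r') | r' <- [seq r' <- iota r.+1 (size alpha - r) | comp_at alpha r < comp_at alpha r']].

Lemma mem_SF alpha : snowy alpha -> forall r c,
  ((r, c) \in snowflakes (diag alpha)) =
  ((r, c) \notin diag alpha) && [exists r' : 'I_(size alpha).+1,
     [&& 0 < r < r', 0 < comp_at alpha r' & c == comp_at alpha r']].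
Proof.
move=> Hs r c; rewrite /snowflakes mem_filter; congr andb.
apply/allpairsPdep/existsP.
- case=> [[q1 q2] [r0 [Hq Hr0 [-> ->]]]]; move: Hq.
  rewrite -/(dark alpha) mem_dark // => /andP[Hp /eqP Eq].
  have /andP[_ Hle] := @comp_at0 _ _ Hp.
  move: Hr0; rewrite mem_iota /= => Hr0.
  exists (Ordinal (n:=(size alpha).+1) (m:=q1) (leq_trans Hle (leqnn _) : q1 < (size alpha).+1)) => /=.
  rewrite Hp Eq eqxx !andbT; lia.
- case=> [[r' Hr']] /= /and3P[/andP[H1 H2] Hp /eqP->].
  exists (r', comp_at alpha r'), r; split => //=.
  + by rewrite -/(dark alpha) mem_dark // Hp eqxx.
  + rewrite mem_iota; lia.
Qed.

Lemma rajcode_T alpha r : snowy alpha -> 0 < r -> rajcode alpha r = size (T2 alpha r).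
Proof.
move=> Hs Hr; rewrite /rajcode /snow_cells -size_filter filter_undup.
apply: perm_size; apply: uniq_perm; first exact: undup_uniq.
- rewrite cat_uniq; apply/and3P; split.
  + by rewrite map_inj_uniq ?iota_uniq // => x y [].
  + apply/hasPn => p /mapP [r' Hr' ->]; apply/negP => /mapP [c Hc [E]].
    move: Hr'; rewrite mem_filter => /andP [Hlt _].
    by move: Hc; rewrite mem_iota -E; lia.
  + rewrite map_inj_in_uniq ?filter_uniq ?iota_uniq //.
    move=> x y; rewrite !mem_filter => /andP[Hx _] _ [E].
    by apply: (@snowy_inj _ _ _ Hs _ E); lia.
- case=> r0 c; rewrite mem_undup mem_filter mem_cat /=.
  have -> : ((r0, c) \in T2 alpha r) = (r0 == r) && ((r, c) \in T2 alpha r).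
    case: eqP => [->|Hne] //; rewrite mem_cat; apply/negP => /orP[] /mapP [x _ [E _]]; by apply Hne.
  case: (r0 =P r) => [->|] //=.
  rewrite mem_SF // mem_cat mem_diag Hr /=.
  apply/idP/idP.
  + case/orP => [/andP[Hc Hle]|/andP[Hn /existsP [[r' Hr'] /= /and3P[Hrr Hp /eqP E]]]].
    * apply/orP; left; apply/mapP; exists c => //; rewrite mem_iota; lia.
    * apply/orP; right; apply/mapP; exists r'; last by rewrite E.
      rewrite mem_filter mem_iota -E.
      have := @comp_at0 _ _ Hp.
      move: Hn; rewrite E Hp /=; lia.
  + case/orP => /mapP.
    * case=> x; rewrite mem_iota => Hx [->]; apply/orP; left; lia.
    * case=> r'; rewrite mem_filter mem_iota => /andP[Hlt Hr'] [->].
      apply/orP; right.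
      have Hp : 0 < comp_at alpha r' by lia.
      rewrite Hp -ltnNge Hlt /=.
      have /andP[_ Hle] := @comp_at0 _ _ Hp.
      apply/existsP; exists (Ordinal (n:=(size alpha).+1) (m:=r') (Hle : r' < (size alpha).+1)) => /=.
      rewrite Hp eqxx !andbT; lia.
Qed.

Lemma rajcode_formula alpha r : snowy alpha -> 0 < r ->
  rajcode alpha r = comp_at alpha r
           + count (fun r' => comp_at alpha r < comp_at alpha r')
                   (iota r.+1 (size alpha - r)).
Proof.
move=> Hs Hr; rewrite rajcode_T // /T2 size_cat !size_map size_iota size_filter //.
Qed.

Lemma count_sum (T : Type) (a : pred T) s : count a s = \sum_(x <- s) a x.
Proof. by elim: s => [|x s IH]; rewrite ?big_nil ?big_cons //= IH. Qed.

Lemma sum_comp alpha : \sum_(1 <= i < (size alpha).+1) comp_at alpha i = sumn alpha.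
Proof.
rewrite big_add1 /= sumnE [RHS](big_nth 0) !big_mkord.
by apply: eq_bigr.
Qed.

Lemma raj_formula alpha : snowy alpha ->
  raj alpha =
        comp_size alpha
        + count (fun rr : nat * nat =>
                   (rr.1 < rr.2) && (comp_at alpha rr.1 < comp_at alpha rr.2))
                [seq (r, r') | r <- iota 1 (size alpha), r' <- iota 1 (size alpha)].
Proof.
move=> Hs; rewrite /raj.
rewrite (eq_big_nat _ _ (F2 := fun i => comp_at alpha i + count (fun r' => comp_at alpha i < comp_at alpha r')
                   (iota i.+1 (size alpha - i)))); last first.
  by move=> i /andP[Hi _]; rewrite rajcode_formula.
rewrite big_split /= sum_comp; congr addn.
rewrite count_sum big_allpairs /index_iota subSS subn0 big_seq_cond [RHS]big_seq_cond.
apply: eq_bigr => r /andP[Hr _].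
rewrite -count_sum.
set n := size alpha.
have Hrn : r <= n by move: Hr; rewrite mem_iota; lia.
have E : iota 1 n = iota 1 r ++ iota r.+1 (n - r).
  by rewrite -{1}(subnKC Hrn) iotaD add1n.
rewrite E count_cat.
rewrite [X in _ = X + _](eq_in_count (a2 := pred0)); last first.
  move=> x; rewrite mem_iota /=; lia.
rewrite count_pred0 add0n.
apply: eq_in_count => x; rewrite mem_iota /= => /andP[H _]; by rewrite H.
Qed.

Theorem lemma4p18 (alpha : seq nat) :
  snowy alpha ->
  [/\ (forall r c : nat,
         ((r, c) \in dark alpha) = (0 < comp_at alpha r) && (c == comp_at alpha r)),
      (forall r : nat, 1 <= r ->
         rajcode alpha r =
           comp_at alpha r
           + count (fun r' => comp_at alpha r < comp_at alpha r')
                   (iota r.+1 (size alpha - r)))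
    & raj alpha =
        comp_size alpha
        + count (fun rr : nat * nat =>
                   (rr.1 < rr.2) && (comp_at alpha rr.1 < comp_at alpha rr.2))
                [seq (r, r') | r <- iota 1 (size alpha), r' <- iota 1 (size alpha)]].
Proof.
move=> Hs; split.
- exact: mem_dark.
- by move=> r Hr; apply: rajcode_formula.
- exact: raj_formula.
Qed.
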